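(* Let $p\ge 2$ and $n\ge 1$ be integers. If there exists a $p$-gadget on $n$ vertices, then there exists a $p$-solvable oriented graph on $n\binom{p}{2}+p$ vertices.
   Context: A directed graph $D=(V,E)$ has arcs $E \subseteq \{(u,v)\in V^2 : u \neq v\}$; it is an oriented graph if it never contains both $(u,v)$ and $(v,u)$. $N^-(v)=\{u:(u,v)\in E\}$. For $q\ge2$ let $[q]=\{0,\dots,q-1\}$. A $D$-function over $[q]$ is a map $f=(f_v)_{v\in V}:[q]^V\to[q]^V$ with each $f_v(x)$ depending only on $(x_u)_{u\in N^-(v)}$. $D$ is $q$-solvable if some $D$-function $f$ over $[q]$ has the property that for every $x\in[q]^V$ there is $v$ with $f_v(x)=x_v$. A $q$-gadget is an oriented graph $D$ with vertices labelled $1,\dots,n$ which is not $q$-solvable, but for which there exist a $D$-function $f$ over $[q]$ and a function $\phi:[q]^{n-1}\to[q]$ such that every $x\in[q]^n$ with $f_v(x)\ne x_v$ for all $v$ satisfies $x_1=\phi(x_2,\dots,x_n)$. *)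

(* Defs.v *)
From mathcomp Require Import all_boot.
Set Implicit Arguments. Unset Strict Implicit. Unset Printing Implicit Defensive.

(* A digraph on vertex set 'I_n is given by its arc relation E : rel 'I_n,
   where E u v means (u,v) is an arc. Configurations x in [q]^V are
   finite functions {ffun 'I_n -> 'I_q}. *)

Definition config (n q : nat) := {ffun 'I_n -> 'I_q}.

Definition oriented (n : nat) (E : rel 'I_n) : Prop :=
  (forall u, ~~ E u u) /\ (forall u v, E u v -> ~~ E v u).

Definition Dfunction (n q : nat) (E : rel 'I_n)
    (f : config n q -> config n q) : Prop :=
  forall (x y : config n q) (v : 'I_n),
    (forall u, E u v -> x u = y u) -> f x v = f y v.

Definition solvable (n q : nat) (E : rel 'I_n) : Prop :=
  exists f : config n q -> config n q,
    Dfunction E f /\ forall x : config n q, exists v, f x v = x v.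

(* q-gadget: vertices labelled 1..n are 'I_n with label i+1 <-> index i,
   so vertex "1" is the vertex of index 0. phi : [q]^{n-1} -> [q] is encoded
   as a map on configurations that does not depend on coordinate 0. *)
Definition gadget (n q : nat) (E : rel 'I_n) : Prop :=
  oriented E /\ ~ solvable q E /\
  exists (f : config n q -> config n q) (phi : config n q -> 'I_q),
    Dfunction E f /\
    (forall x y : config n q,
        (forall u : 'I_n, val u != 0 -> x u = y u) -> phi x = phi y) /\
    (forall x : config n q, (forall v, f x v != x v) ->
        forall u : 'I_n, val u = 0 -> x u = phi x).

(* Main.v *)
Require Import Defs.
From mathcomp Require Import all_boot.
From mathcomp Require Import ssralg zmodp.
Import GRing.Theory.

Set Implicit Arguments. Unset Strict Implicit. Unset Printing Implicit Defensive.

Definition orientedT (T : finType) (E : rel T) : Prop :=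
  (forall u, ~~ E u u) /\ (forall u v, E u v -> ~~ E v u).
Definition DfunT (T : finType) (q : nat) (E : rel T)
  (f : {ffun T -> 'I_q} -> {ffun T -> 'I_q}) : Prop :=
  forall (x y : {ffun T -> 'I_q}) v, (forall u, E u v -> x u = y u) -> f x v = f y v.
Definition solvT (T : finType) (q : nat) (E : rel T) : Prop :=
  exists f, @DfunT T q E f /\ forall x : {ffun T -> 'I_q}, exists v, f x v = x v.

Lemma transfer (T : finType) (q N : nat) (d : 'I_q) (h : T -> 'I_N)
  (hinj : injective h) (E : rel T) :
  orientedT E -> solvT q E -> exists E' : rel 'I_N, oriented E' /\ solvable q E'.
Proof.
pose inv (v : 'I_N) := [pick a | h a == v].
have invh a : inv (h a) = Some a.
  rewrite /inv; case: pickP => [b /eqP/hinj -> //|/(_ a)]; by rewrite eqxx.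
have invS v a : inv v = Some a -> h a = v.
  rewrite /inv; case: pickP => [b /eqP hb [<-] //|//].
pose E' (u v : 'I_N) := if inv u is Some a then (if inv v is Some b then E a b else false) else false.
have E'h a b : E' (h a) (h b) = E a b by rewrite /E' !invh.
have E'inv u v : E' u v -> exists a b, [/\ u = h a, v = h b & E a b].
  rewrite /E'; case Hu: (inv u) => [a|//]; case Hv: (inv v) => [b|//] Hab.
  by exists a, b; rewrite (invS _ _ Hu) (invS _ _ Hv).
move=> [irr asym] [f [Df sol]].
exists E'; split.
  split.
    move=> u; apply/negP=> /E'inv [a [b [-> /hinj <-]]]; by rewrite (negbTE (irr a)).
  move=> u v /E'inv [a [b [-> -> Hab]]]; by rewrite E'h asym.
pose pb (x : config N q) : {ffun T -> 'I_q} := [ffun a => x (h a)].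
exists (fun x => [ffun v => if inv v is Some b then f (pb x) b else d]).
split.
  move=> x y v Hxy; rewrite !ffunE; case Hv: (inv v) => [b|//].
  apply: Df => a Hab; rewrite !ffunE; apply: Hxy.
  by rewrite -(invS _ _ Hv) E'h.
move=> x; have [a Ha] := sol (pb x); exists (h a).
by rewrite ffunE invh Ha ffunE.
Qed.
Section Construction.
Variables (p' n' : nat).
Local Notation p := p'.+2.
Local Notation n := n'.+1.
Variables (E0 : rel 'I_n) (f0 : config n p -> config n p) (phi : config n p -> 'I_p).
Hypothesis irr0 : forall u, ~~ E0 u u.
Hypothesis asym0 : forall u v, E0 u v -> ~~ E0 v u.
Hypothesis Df0 : Dfunction E0 f0.
Hypothesis indep : forall x y : config n p,
        (forall u : 'I_n, val u != 0 -> x u = y u) -> phi x = phi y.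
Hypothesis fix0 : forall x : config n p, (forall v, f0 x v != x v) ->
        forall u : 'I_n, val u = 0 -> x u = phi x.

Definition Pair := {t : 2.-tuple 'I_p | sorted ltn (map val t)}.
Definition lo (t : Pair) : 'I_p := tnth (val t) ord0.
Definition hi (t : Pair) : 'I_p := tnth (val t) (@Ordinal 2 1 isT).

Lemma lo_hi t : lo t < hi t.
Proof.
case: t => [[[|a [|b [|]]] //= Hs] H]. rewrite /lo /hi /tnth /=. by case/andP: H.
Qed.

Definition V := ('I_p + (Pair * 'I_n))%type.

Definition ER (a b : V) : bool :=
  match a, b with
  | inl a, inl b => b < a
  | inl a, inr (t, _) => a == lo t
  | inr (t, _), inl b => b == hi t
  | inr (t, u), inr (s, w) => (t == s) && E0 u w
  end.

Lemma ER_oriented : orientedT ER.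
Proof.
split.
  by case=> [a|[t u]] /=; rewrite ?ltnn ?eqxx ?irr0.
case=> [a|[t u]] [b|[s w]] /=.
- by move=> H; rewrite -leqNgt ltnW.
- move=> /eqP ->; apply/negP=> /eqP H; have := lo_hi s; by rewrite H ltnn.
- move=> /eqP ->; apply/negP=> /eqP H; have := lo_hi t; by rewrite H ltnn.
- by case/andP=> /eqP -> H; rewrite eqxx /= asym0.
Qed.

Definition yc (t : Pair) (X : {ffun V -> 'I_p}) : config n p :=
  [ffun u => if u == ord0 then (X (inr (t, u)) - X (inl (lo t)))%R else X (inr (t, u))].
Definition zc (t : Pair) (X : {ffun V -> 'I_p}) : config n p :=
  [ffun u => X (inr (t, u))].

Definition est (X : {ffun V -> 'I_p}) (k m : 'I_p) : 'I_p :=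
  if m < k then
    (if (insub [tuple m; k] : option Pair) is Some t then (X (inr (t, ord0)) - phi (zc t X))%R
     else m)
  else X (inl m).

Definition FF (X : {ffun V -> 'I_p}) : {ffun V -> 'I_p} :=
  [ffun v : V => match v with
   | inl k => ((k : 'I_p) - \sum_(m < p | m != k) est X k m)%R
   | inr (t, u) => if u == ord0 then (f0 (yc t X) u + X (inl (lo t)))%R else f0 (yc t X) u
   end].

Lemma FF_D : DfunT ER FF.
Proof.
move=> x y [k|[t u]] Hxy; rewrite !ffunE.
  congr (_ - _)%R; apply: eq_bigr => m mk; rewrite /est.
  case: ltnP => [lt_mk|le_km].
    case: insubP => [t _ Ht|//].
    have hit : hi t = k by rewrite /hi Ht.
    congr (_ - _)%R.
      by apply: Hxy; rewrite /= hit.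
    congr phi; apply/ffunP => w; rewrite !ffunE; apply: Hxy; by rewrite /= hit.
  apply: Hxy => /=; by rewrite ltn_neqAle eq_sym mk le_km.
have Hlo : x (inl (lo t)) = y (inl (lo t)) by apply: Hxy; rewrite /= eqxx.
have Hf : f0 (yc t x) u = f0 (yc t y) u.
  apply: Df0 => w Hw; rewrite !ffunE.
  have Hw' : x (inr (t, w)) = y (inr (t, w)) by apply: Hxy; rewrite /= eqxx Hw.
  by rewrite Hw' Hlo.
by rewrite Hf Hlo.
Qed.

Lemma FF_sol X : exists v, FF X v = X v.
Proof.
case: (boolP [exists v, FF X v == X v]) => [/existsP [v /eqP Hv]|H].
  by exists v.
exfalso.
have H' v : FF X v != X v by apply/negP => Hv; move/existsP: H; apply; exists v.
have key t : X (inl (lo t)) = (X (inr (t, ord0)) - phi (zc t X))%R.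
  have fpf : forall u, f0 (yc t X) u != yc t X u.
    move=> u; have := H' (inr (t, u)); rewrite !ffunE.
    case Hu: (u == ord0) => //; apply: contra => /eqP ->; by rewrite subrK.
  have := fix0 fpf (u := ord0) erefl.
  rewrite ffunE eqxx => E1.
  have E2 : phi (yc t X) = phi (zc t X).
    apply: indep => u Hu; rewrite !ffunE.
    have -> : (u == ord0) = false by apply/negbTE; apply: contra Hu => /eqP ->.
    by [].
  rewrite E2 in E1; by rewrite -E1 opprB addrC subrK.
have estE k m : m != k -> est X k m = X (inl m).
  move=> mk; rewrite /est; case: ltnP => // lt_mk.
  have Hs : sorted ltn (map val [tuple m; k]) by rewrite /= lt_mk.
  rewrite insubT /=. rewrite (key (Sub [tuple m; k] Hs)). by [].
pose T := (\sum_(m < p) X (inl m))%R.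
have := H' (inl T); rewrite ffunE.
rewrite (eq_bigr (fun m => X (inl m))); last by move=> m; apply: estE.
by rewrite {1}/T (bigD1 T) //= addrK eqxx.
Qed.

Lemma V_card : #|{: V}| = p + 'C(p, 2) * n.
Proof.
rewrite card_sum card_prod !card_ord /Pair card_sig.
by rewrite -card_ltn_sorted_tuples; congr (_ + _ * _); apply: eq_card => t; rewrite !inE.
Qed.

End Construction.

Theorem lemma8 (p n : nat) (hp : 2 <= p) (hn : 1 <= n) :
  (exists E : rel 'I_n, gadget p E) ->
  exists E : rel 'I_(n * 'C(p, 2) + p), oriented E /\ solvable p E.
Proof.
case: p hp => [|[|p']] // _; case: n hn => [|n'] // _.
move=> [E [[irr asym] [_ [f [phi [Df [indep fx]]]]]]].
have le : #|{: V p' n'}| <= n'.+1 * 'C(p'.+2, 2) + p'.+2.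
  by rewrite V_card addnC mulnC.
pose h (v : V p' n') := widen_ord le (enum_rank v).
have hinj : injective h.
  move=> a b /(congr1 val) /= /val_inj; exact: enum_rank_inj.
apply: (@transfer _ _ _ ord0 h hinj (ER E)).
  exact: ER_oriented.
exists (FF f phi); split; first exact: FF_D.
exact: FF_sol.
Qed.
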